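(* Let $p\in\mathbb{N}$, $\xi_k=\frac{k}{p}\pi$ for $k=0,\dots,p$, and let $\beta=(\beta_0,\dots,\beta_p)\in\mathbb{R}^{p+1}$. Define $g(\xi)=\sum_{j=0}^p\beta_j\cos(j\xi)$ and $\mathbf{g}=(g(\xi_0),\dots,g(\xi_p))\in\mathbb{R}^{p+1}$. Then $\|\beta\|_2\le\frac{2}{\sqrt{p+1}}\|\mathbf{g}\|_2$. *)

(* Defs.v *)
From mathcomp Require Import all_boot all_order all_algebra.
From mathcomp Require Import all_classical all_reals all_analysis.
Set Implicit Arguments. Unset Strict Implicit. Unset Printing Implicit Defensive.
Import Order.TTheory GRing.Theory Num.Theory.
Local Open Scope ring_scope.

Definition xi (R : realType) (p k : nat) : R := (k%:R / p%:R) * pi.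

Definition gcos (R : realType) (p : nat) (beta : 'I_p.+1 -> R) (x : R) : R :=
  \sum_(j < p.+1) beta j * cos (j%:R * x).

Definition norm2 (R : realType) (n : nat) (v : 'I_n -> R) : R :=
  Num.sqrt (\sum_(i < n) v i ^+ 2).

(* Main.v *)
Require Import Defs.
From mathcomp Require Import all_boot all_order all_algebra.
From mathcomp Require Import all_classical all_reals all_analysis.
From mathcomp Require Import ring lra zify.
Import Order.TTheory GRing.Theory Num.Theory.
Local Open Scope ring_scope.

Section S.
Variable R : realType.

Lemma sin_natpi (m : nat) : sin (m%:R * pi) = 0 :> R.
Proof.
elim: m => [|m IH]; first by rewrite mul0r sin0.
by rewrite -addn1 natrD mulrDl mul1r sinDpi IH oppr0.
Qed.

Lemma cos_nat2pi (m : nat) : cos (m%:R * (pi *+ 2)) = 1 :> R.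
Proof.
elim: m => [|m IH]; first by rewrite mul0r cos0.
by rewrite -addn1 natrD mulrDl mul1r cosD2pi IH.
Qed.

Lemma tele (n : nat) (h : R) :
  \sum_(k < n.+1) 2 * sin h * cos (k%:R * (2 * h)) =
  sin ((n%:R * 2 + 1) * h) + sin h.
Proof.
elim: n => [|n IH].
  rewrite big_ord1 /= mul0r cos0 mulr1 mul0r add0r mul1r; ring.
rewrite big_ord_recr /= IH.
have -> : ((n.+1)%:R * 2 + 1) * h = (n.+1)%:R * (2 * h) + h.
  by rewrite -addn1 natrD; ring.
have -> : (n%:R * 2 + 1) * h = (n.+1)%:R * (2 * h) - h.
  by rewrite -addn1 natrD; ring.
rewrite !sinD sinN cosN; ring.
Qed.

Definition W (p : nat) (t : R) : R :=
  \sum_(k < p.+1) cos (t * xi R p k) - (cos (t * xi R p 0) + cos (t * xi R p p)) / 2.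

Lemma Wsin (p : nat) (t : R) : (0 < p)%N ->
  2 * sin (t * pi / (p%:R * 2)) * W p t = sin (t * pi) * cos (t * pi / (p%:R * 2)).
Proof.
move=> p0.
have pn0 : p%:R != 0 :> R by rewrite pnatr_eq0 -lt0n.
set h := t * pi / (p%:R * 2).
have xk : forall k : nat, t * xi R p k = k%:R * (2 * h).
  by move=> k; rewrite /xi /h; field; rewrite pnatr_eq0 /= ?andbT // -lt0n.
have tp : t * pi = p%:R * (2 * h) by rewrite /h; field; rewrite pnatr_eq0 /= ?andbT // -lt0n.
rewrite /W !xk.
have -> : \sum_(k < p.+1) cos (t * xi R p k) = \sum_(k < p.+1) cos (k%:R * (2 * h)).
  by apply: eq_bigr => k _; rewrite xk.
rewrite mulrBr mulr_sumr tele mul0r cos0 tp.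
have -> : (p%:R * 2 + 1) * h = p%:R * (2 * h) + h by ring.
by rewrite sinD; field.
Qed.

Lemma W_zero (p m : nat) : (0 < m)%N -> (m < p * 2)%N -> W p m%:R = 0.
Proof.
move=> m0 mp.
have p0 : (0 < p)%N by rewrite lt0n; apply/eqP => p0; move: mp; rewrite p0.
have := @Wsin p m%:R p0; rewrite sin_natpi mul0r.
set h := _ / _ => /eqP; rewrite !mulf_eq0 pnatr_eq0 /=.
have hpos : 0 < sin h.
  apply: sin_gt0_pi; apply/andP; split.
    by rewrite /h divr_gt0 ?mulr_gt0 ?pi_gt0 ?ltr0n.
  rewrite /h ltr_pdivrMr ?mulr_gt0 ?ltr0n // mulrC ltr_pM2l ?pi_gt0 //.
  by rewrite -natrM ltr_nat.
by rewrite (gt_eqF hpos) /= => /eqP.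
Qed.

Lemma W_even (p : nat) (t : R) : W p (- t) = W p t.
Proof.
rewrite /W; congr (_ - (_ + _) / 2); last by rewrite mulNr cosN.
  by apply: eq_bigr => k _; rewrite mulNr cosN.
by rewrite mulNr cosN.
Qed.

Lemma W_0 (p : nat) : W p 0 = p%:R.
Proof.
rewrite /W.
under eq_bigr do rewrite mul0r cos0.
rewrite !mul0r cos0 sumr_const card_ord -[_ *+ _]mulr_natr mul1r.
by rewrite -addn1 natrD; field.
Qed.

Lemma W_2p (p : nat) : (0 < p)%N -> W p (p * 2)%:R = p%:R.
Proof.
move=> p0.
have pn0 : p%:R != 0 :> R by rewrite pnatr_eq0 -lt0n.
have xk : forall k : nat, (p * 2)%:R * xi R p k = k%:R * (pi *+ 2).
  by move=> k; rewrite /xi natrM; field.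
rewrite /W.
under eq_bigr do rewrite xk cos_nat2pi.
rewrite !xk !cos_nat2pi sumr_const card_ord -[_ *+ _]mulr_natr mul1r.
by rewrite -addn1 natrD; field.
Qed.

Lemma cosprod (a b x : R) :
  cos (a * x) * cos (b * x) = (cos ((a + b) * x) + cos ((a - b) * x)) / 2.
Proof. by rewrite [(a - b) * x]mulrBl cosB [(a + b) * x]mulrDl cosD; field. Qed.

Lemma sqsum n (F : 'I_n -> R) : (\sum_(j < n) F j) ^+ 2 = \sum_(j < n) \sum_(l < n) F j * F l.
Proof. by rewrite expr2 big_distrlr. Qed.

Lemma comb n (a A B C : 'I_n -> 'I_n -> R) :
  \sum_(j < n) \sum_(l < n) a j l * A j l
  - (\sum_(j < n) \sum_(l < n) a j l * B j l + \sum_(j < n) \sum_(l < n) a j l * C j l) / 2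
  = \sum_(j < n) \sum_(l < n) a j l * (A j l - (B j l + C j l) / 2).
Proof.
rewrite -big_split mulr_suml -sumrB; apply: eq_bigr => j _.
rewrite -big_split mulr_suml -sumrB; apply: eq_bigr => l _.
change (a j l * A j l - (a j l * B j l + a j l * C j l) / 2 = a j l * (A j l - (B j l + C j l) / 2)); ring.
Qed.

Definition cc (p : nat) (k j : nat) : R := cos (j%:R * xi R p k).

Definition T (p j l : nat) : R :=
  \sum_(k < p.+1) cc p k j * cc p k l - (cc p 0 j * cc p 0 l + cc p p j * cc p p l) / 2.

Lemma T_W p j l : T p j l = (W p (j%:R + l%:R) + W p (j%:R - l%:R)) / 2.
Proof.
rewrite /T /W /cc.
under eq_bigr do rewrite cosprod.
rewrite !cosprod -mulr_suml big_split /=.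
ring.
Qed.

Lemma expand p (beta : 'I_p.+1 -> R) :
  \sum_(k < p.+1) gcos beta (xi R p k) ^+ 2
  - (gcos beta (xi R p 0) ^+ 2 + gcos beta (xi R p p) ^+ 2) / 2
  = \sum_(j < p.+1) \sum_(l < p.+1) (beta j * beta l) * T p j l.
Proof.
rewrite /T -comb /gcos !sqsum.
congr (_ - (_ + _) / 2).
- under eq_bigr do rewrite sqsum.
  rewrite exchange_big; apply: eq_bigr => j _.
  rewrite exchange_big; apply: eq_bigr => l _.
  rewrite mulr_sumr; apply: eq_bigr => k _; rewrite /cc; ring.
- by apply: eq_bigr => j _; apply: eq_bigr => l _; rewrite /cc; ring.
- by apply: eq_bigr => j _; apply: eq_bigr => l _; rewrite /cc; ring.
Qed.

Lemma T_off p j l : (j <= p)%N -> (l <= p)%N -> j != l -> T p j l = 0.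
Proof.
move=> jp lp jl; rewrite T_W -natrD W_zero; first last.
- by move: jl => /eqP jl; lia.
- by move: jl => /eqP jl; lia.
case: (ltngtP j l) => [jl'|lj|e]; last by rewrite e eqxx in jl.
- rewrite -opprB -natrB ?(ltnW jl') // W_even W_zero; first by rewrite addr0 mul0r.
  + by rewrite subn_gt0.
  + lia.
- rewrite -natrB ?(ltnW lj) // W_zero; first by rewrite addr0 mul0r.
  + by rewrite subn_gt0.
  + lia.
Qed.

Lemma T_diag p j : (0 < p)%N -> (j <= p)%N -> p%:R / 2 <= T p j j.
Proof.
move=> p0 jp; rewrite T_W subrr W_0 -natrD.
have : 0 <= W p (j + j)%:R.
  have [->|j0] := eqVneq j 0%N; first by rewrite W_0 ler0n.
  have [->|jp'] := eqVneq j p; first by rewrite addnn -muln2 W_2p ?ler0n.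
  rewrite W_zero //; lia.
move=> H; lra.
Qed.
End S.

Theorem mainTheorem16 (R : realType) (p : nat) (beta : 'I_p.+1 -> R) :
  norm2 beta <=
  2 / Num.sqrt (p.+1)%:R * norm2 (fun k : 'I_p.+1 => gcos beta (xi R p k)).
Proof.
case: p beta => [|p'] beta.
  rewrite /norm2 /gcos !big_ord1 /= mul0r cos0 mulr1 sqrtr1 divr1.
  have := sqrtr_ge0 (beta ord0 ^+ 2); lra.
set p := p'.+1.
have p0 : (0 < p)%N by [].
set Sb := \sum_(j < p.+1) beta j ^+ 2.
set Sg := \sum_(k < p.+1) gcos beta (xi R p k) ^+ 2.
have Sb0 : 0 <= Sb by rewrite /Sb sumr_ge0 // => j _; rewrite sqr_ge0.
have Sg0 : 0 <= Sg by rewrite /Sg sumr_ge0 // => j _; rewrite sqr_ge0.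
have H : p%:R / 2 * Sb <= Sg.
  have E := @expand R p beta.
  have D : \sum_(j < p.+1) \sum_(l < p.+1) (beta j * beta l) * T R p j l
         = \sum_(j < p.+1) (beta j * beta j) * T R p j j.
    apply: eq_bigr => j _; rewrite (bigD1 j) //= big1 ?addr0 // => l lj.
    rewrite T_off ?mulr0 //; first by rewrite -ltnS.
    - by rewrite -ltnS.
    - by rewrite eq_sym.
  have L : p%:R / 2 * Sb <= \sum_(j < p.+1) (beta j * beta j) * T R p j j.
    rewrite /Sb mulr_sumr; apply: ler_sum => j _.
    rewrite expr2 mulrC; apply: ler_wpM2l; first by rewrite -expr2 sqr_ge0.
    by apply: T_diag => //; rewrite -ltnS.
  apply: (le_trans L); rewrite -D -E -/Sg.
  have : 0 <= gcos beta (xi R p 0) ^+ 2 + gcos beta (xi R p p) ^+ 2.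
    by rewrite addr_ge0 ?sqr_ge0.
  lra.
rewrite /norm2 -/Sb -/Sg.
have P0 : 0 < (p.+1)%:R :> R by rewrite ltr0n.
have -> : 2 / Num.sqrt (p.+1)%:R * Num.sqrt Sg = Num.sqrt (4 / (p.+1)%:R * Sg).
  rewrite sqrtrM ?divr_ge0 ?ler0n // sqrtrM ?ler0n // sqrtrV ?ler0n //.
  have -> : (4 : R) = 2 ^+ 2 by rewrite expr2 -natrM.
  by rewrite sqrtr_sqr ger0_norm.
rewrite ler_sqrt ?mulr_ge0 ?divr_ge0 ?ler0n //.
rewrite mulrAC ler_pdivlMr // -addn1 natrD.
have q1 : 1 <= p%:R :> R by rewrite ler1n.
have : 0 <= (p%:R - 1) * Sb by rewrite mulr_ge0 // subr_ge0.
nra.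
Qed.
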